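(* Let $n \ge 2$ and $\Sigma = \{1, 2, \dots, n\}$. Define the word $w \in \Sigma^{2n}$ by $w[1]w[2]w[3] = 1\,2\,1$; for each $x \in \{2, 3, \dots, n-1\}$, $w[2x] = x+1$ and $w[2x+1] = x$; and $w[2n] = n$. Then $TG(w)$ is a temporal path graph, i.e. its underlying graph is a path on the $n$ vertices $v_1, \dots, v_n$.
   Context: $w[i]$ denotes the $i$-th letter of $w$, $w[i,j]$ the factor $w[i]\cdots w[j]$, $\mathrm{letters}(u)$ the set of symbols of $u$, and $\pi_{\mathcal S}(w)$ the subsequence of $w$ of all occurrences of symbols in $\mathcal S$. Symbols $x,y$ alternate in $w$ if $\pi_{\{x,y\}}(w) \in \{(xy)^k, (xy)^kx, (yx)^k, (yx)^ky : k \ge 0\}$. $G(w)$ has vertex set $\{v_1,\dots,v_n\}$ and undirected edge $(v_x,v_y)$ iff $x\neq y$ alternate in $w$. Start points: $S_1=1$, and $S_i$ is the least index $j>S_{i-1}$ with $w[j] \in \mathrm{letters}(w[S_{i-1},j-1])$; $S_1<\dots<S_T$ are all start points. The $t$-th timestep factor is $w[S_t,S_{t+1}-1]$ ($t<T$) or $w[S_T,|w|]$ ($t=T$). $TG(w)=(V,E_1,\dots,E_T)$ with $E_t$ the set of edges $(v_x,v_y)$ of $G(w)$ with $x$ or $y$ occurring in the $t$-th timestep factor; its underlying graph is $(V,\bigcup_t E_t)$. *)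

(* Defs.v *)
(* Words are [seq nat]; positions in the paper are 1-based,
   so the paper's w[i] is [nth 0 w i.-1]. Letters/vertices are nats 1..n
   (vertex v_x is identified with the letter x). *)
From mathcomp Require Import all_boot all_order all_fingroup.
Set Implicit Arguments. Unset Strict Implicit. Unset Printing Implicit Defensive.

Definition proj2 (w : seq nat) (x y : nat) : seq nat :=
  filter (fun c => (c == x) || (c == y)) w.

Definition alternate (w : seq nat) (x y : nat) : Prop :=
  exists k : nat,
    proj2 w x y = flatten (nseq k [:: x; y]) \/
    proj2 w x y = flatten (nseq k [:: x; y]) ++ [:: x] \/
    proj2 w x y = flatten (nseq k [:: y; x]) \/
    proj2 w x y = flatten (nseq k [:: y; x]) ++ [:: y].

Definition Gedge (w : seq nat) (x y : nat) : Prop := x <> y /\ alternate w x y.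

(* letters(w[a..b]) with 0-based a, half-open end *)
Definition factor (w : seq nat) (a b : nat) : seq nat := take (b - a) (drop a w).

(* 0-based: the least j > s (j < |w|) with w[j] in letters(w[s..j-1]) *)
Definition next_start (w : seq nat) (s : nat) : option nat :=
  let c := find (fun j => nth 0 w j \in factor w s j) (iota s.+1 (size w - s.+1)) in
  if c < size w - s.+1 then Some (s.+1 + c) else None.

Fixpoint starts_from (w : seq nat) (fuel s : nat) : seq nat :=
  s :: match fuel with
       | 0 => [::]
       | f.+1 => match next_start w s with
                 | Some s' => starts_from w f s'
                 | None => [::]
                 end
       end.

(* all start points S_1 < ... < S_T (0-based); fuel |w| suffices since they increase *)
Definition starts (w : seq nat) : seq nat := starts_from w (size w) 0.

Definition timesteps (w : seq nat) : seq (seq nat) :=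
  let ss := starts w in
  [seq factor w p.1 p.2 | p <- zip ss (rcons (behead ss) (size w))].

Definition TGedge (w : seq nat) (t x y : nat) : Prop :=
  Gedge w x y /\ ((x \in nth [::] (timesteps w) t) \/ (y \in nth [::] (timesteps w) t)).

Definition underlying_edge (w : seq nat) (x y : nat) : Prop :=
  exists t, t < size (timesteps w) /\ TGedge w t x y.

(* the underlying graph of TG(w), on vertices v_1..v_n, is a path:
   some ordering p of the vertices makes the edges exactly the consecutive pairs. *)
Definition underlying_is_path (n : nat) (w : seq nat) : Prop :=
  exists p : {perm 'I_n}, forall i j : 'I_n,
    underlying_edge w i.+1 j.+1 <-> ((p i).+1 = p j \/ (p j).+1 = p i).

(* Main.v *)
Require Import Defs.
From mathcomp Require Import all_boot all_order all_fingroup.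
From mathcomp Require Import zify.
Set Implicit Arguments. Unset Strict Implicit. Unset Printing Implicit Defensive.

Definition pos1 x := if x == 1 then 0 else 2*x-3.
Definition pos2 n x := if x == n then 2*n-1 else 2*x.

Lemma key n w :
  2 <= n ->
  size w = 2 * n ->
  nth 0 w 0 = 1 -> nth 0 w 1 = 2 -> nth 0 w 2 = 1 ->
  (forall x, 2 <= x <= n - 1 ->
     nth 0 w (2 * x).-1 = x.+1 /\ nth 0 w (2 * x + 1).-1 = x) ->
  nth 0 w (2 * n).-1 = n ->
  forall i x, i < 2 * n -> 1 <= x <= n ->
  (nth 0 w i == x) = (i == pos1 x) || (i == pos2 n x).
Proof.
move=> Hn Hs H0 H1 H2 Hx Hl i x Hi Hxr.
have [k [Ei|Ei]] : exists k, i = 2*k \/ i = 2*k+1.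
  by exists (i %/ 2); have := divn_eq i 2; have := ltn_pmod i (isT : 0 < 2); lia.
- have E : nth 0 w i = if k == 0 then 1 else if k == 1 then 1 else k.
    case: eqP => [Ek|/eqP k0]; first by rewrite Ei Ek.
    case: eqP => [Ek|/eqP k1]; first by rewrite Ei Ek.
    have [_ E1] := Hx k ltac:(lia).
    by rewrite Ei -E1; congr nth; lia.
  rewrite E /pos1 /pos2.
  by repeat (case: ifP => /eqP ?); lia.
- have E : nth 0 w i = if k == 0 then 2 else if k == n-1 then n else k.+2.
    case: eqP => [Ek|/eqP k0]; first by rewrite Ei Ek.
    case: eqP => [Ek|/eqP k1].
      by rewrite Ei -Hl; congr nth; lia.
    have [E1 _] := Hx k.+1 ltac:(lia).
    by rewrite Ei -E1; congr nth; lia.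
  rewrite E /pos1 /pos2.
  by repeat (case: ifP => /eqP ?); lia.
Qed.

Lemma proj_lt n w :
  2 <= n -> size w = 2 * n ->
  (forall i x, i < 2 * n -> 1 <= x <= n ->
     (nth 0 w i == x) = (i == pos1 x) || (i == pos2 n x)) ->
  forall x y, 1 <= x -> x < y -> y <= n ->
  proj2 w x y = if y == x.+1 then [:: x; y; x; y] else [:: x; x; y; y].
Proof.
move=> Hn Hs K x y Hx Hxy Hy.
have N1 : forall z, 1 <= z <= n -> nth 0 w (pos1 z) = z.
  move=> z Hz; apply/eqP; rewrite K //; first by rewrite eqxx.
  by rewrite /pos1; case: ifP => /eqP ?; lia.
have N2 : forall z, 1 <= z <= n -> nth 0 w (pos2 n z) = z.
  move=> z Hz; apply/eqP; rewrite K //; first by rewrite eqxx orbT.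
  by rewrite /pos2; case: ifP => /eqP ?; lia.
rewrite /proj2 -(mkseq_nth 0 w) /mkseq filter_map Hs.
set L := if y == x.+1 then [:: pos1 x; pos1 y; pos2 n x; pos2 n y]
         else [:: pos1 x; pos2 n x; pos1 y; pos2 n y].
have -> : [seq i <- iota 0 (2 * n) | preim (nth 0 w) (fun c => (c == x) || (c == y)) i] = L.
  apply: (irr_sorted_eq ltn_trans ltnn).
  - exact: (sorted_filter ltn_trans _ (iota_ltn_sorted _ _)).
  - rewrite /L /pos1 /pos2 /=; by repeat (case: ifP => /eqP ?); simpl; lia.
  - move=> i; rewrite mem_filter mem_iota /= add0n.
    case Hi: (i < 2 * n).
      rewrite andbT (K i x) ?(K i y) //; try lia.
      rewrite /L; case: ifP => /eqP ? ; rewrite !inE /pos1 /pos2;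
      by repeat (case: ifP => /eqP ?); simpl; lia.
    rewrite andbF /L; case: ifP => /eqP ? ; rewrite !inE /pos1 /pos2;
    by repeat (case: ifP => /eqP ?); simpl; lia.
rewrite /L; case: ifP => _ /=; rewrite ?N1 ?N2 //; lia.
Qed.

Lemma next_start_gt w s s' : next_start w s = Some s' -> s < s' < size w.
Proof.
rewrite /next_start /=; case: ifP => // H [<-]. move: H. set c := find _ _. lia.
Qed.

Lemma flatten_from w f s : size w - s <= f -> s <= size w ->
  flatten [seq factor w p.1 p.2 | p <- zip (starts_from w f s)
                                       (rcons (behead (starts_from w f s)) (size w))]
  = drop s w.
Proof.
elim: f s => [|f IH] s Hf Hs.
  rewrite /= cats0 /factor take_oversize // size_drop //.
rewrite /=; case E: (next_start w s) => [s'|].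
  have /andP[H1 H2] := next_start_gt E.
  have := IH s' ltac:(lia) ltac:(lia).
  case: f IH Hf => [|f] IH Hf /=.
    move=> ->. rewrite /factor -[in RHS](cat_take_drop (s' - s) (drop s w)) drop_drop.
    by congr (_ ++ drop _ _); lia.
  case: (next_start w s') => [s''|] /= ->;
  rewrite /factor -[in RHS](cat_take_drop (s' - s) (drop s w)) drop_drop;
  by congr (_ ++ drop _ _); lia.
by rewrite /= cats0 /factor take_oversize // size_drop.
Qed.

Lemma flatten_timesteps w : flatten (timesteps w) = w.
Proof. by rewrite /timesteps /starts flatten_from ?drop0 ?subn0. Qed.

Lemma not_alt (x y u v : nat) : u != v ->
  ~ (exists k : nat,
    [:: u; u; v; v] = flatten (nseq k [:: x; y]) \/
    [:: u; u; v; v] = flatten (nseq k [:: x; y]) ++ [:: x] \/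
    [:: u; u; v; v] = flatten (nseq k [:: y; x]) \/
    [:: u; u; v; v] = flatten (nseq k [:: y; x]) ++ [:: y]).
Proof.
move=> /eqP Huv [k [H|[H|[H|H]]]]; case: k H => [|[|[|k]]] //=;
  case=> *; subst; by [].
Qed.

Lemma proj2C w x y : proj2 w x y = proj2 w y x.
Proof. by apply: eq_filter => c; rewrite orbC. Qed.

Theorem lemma13 (n : nat) (w : seq nat) :
  2 <= n ->
  size w = 2 * n ->
  nth 0 w 0 = 1 -> nth 0 w 1 = 2 -> nth 0 w 2 = 1 ->
  (forall x, 2 <= x <= n - 1 ->
     nth 0 w (2 * x).-1 = x.+1 /\ nth 0 w (2 * x + 1).-1 = x) ->
  nth 0 w (2 * n).-1 = n ->
  underlying_is_path n w.
Proof.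
move=> Hn Hs H0 H1 H2 Hx Hl.
have K := key Hn Hs H0 H1 H2 Hx Hl.
have P := proj_lt Hn Hs K.
have Mem : forall a, 1 <= a <= n -> exists t, t < size (timesteps w) /\ a \in nth [::] (timesteps w) t.
  move=> a Ha.
  have : a \in w.
    apply/(nthP 0); exists (pos1 a); first by rewrite Hs /pos1; case: ifP => /eqP ?; lia.
    by apply/eqP; rewrite K ?eqxx //; rewrite /pos1; case: ifP => /eqP ?; lia.
  rewrite -{1}(flatten_timesteps w) => /flattenP [s /(nthP [::]) [t Ht <-] Hin].
  by exists t.
have G : forall a b, 1 <= a <= n -> 1 <= b <= n -> Gedge w a b <-> (a.+1 = b \/ b.+1 = a).
  move=> a b Ha Hb; rewrite /Gedge /alternate.
  case: (ltngtP a b) => Hab.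
  - rewrite P //; try lia. case: eqP => Eb.
      split=> _; last by split; [lia | exists 2; left].
      by left.
    split; last by lia.
    by move=> [_ H]; exfalso; move: H; apply: not_alt; apply/eqP; lia.
  - rewrite proj2C P //; try lia. case: eqP => Eb.
      split=> _; last by split; [lia | exists 2; right; right; left].
      by right.
    split; last by lia.
    by move=> [_ H]; exfalso; move: H; apply: not_alt; apply/eqP; lia.
  - subst; split; last lia. by case.
exists (1 : {perm 'I_n})%g => i j; rewrite !perm1.
have Hi := ltn_ord i; have Hj := ltn_ord j.
split.
  move=> [t [_ [Ge _]]].
  have := (G i.+1 j.+1 ltac:(lia) ltac:(lia)).1 Ge; lia.
move=> Hij.
have Ge : Gedge w i.+1 j.+1 by apply/G; lia.
have [t [Ht Hm]] := Mem i.+1 ltac:(lia).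
by exists t; split=> //; split=> //; left.
Qed.
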